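(* Let $\gamma$ be a Gutkin curve with contact angle $\alpha$ on the unit sphere $\mathbb{S}^2$, with geodesic curvature $\kappa$, arc-length coordinate $s$ and chord parameterizations $x(t),y(t)$, where the parameter $t$ is chosen so that $\frac{dx}{dt}=\frac{a}{\sqrt{\kappa^2(x)+\sin^2\alpha}}$ and $\frac{dy}{dt}=\frac{a}{\sqrt{\kappa^2(y)+\sin^2\alpha}}$ for a constant $a>0$. Define the function $f$ on $\gamma$, with values in $(0,\pi)$, by $\cot f=\kappa/\sin\alpha$, and set $f_1(t)=f(x(t))$, $f_2(t)=f(y(t))$. Then $$f_1'(t)+f_2'(t)=a\cot\alpha\,\big(\sin f_2(t)-\sin f_1(t)\big).$$
   Context: A smooth convex oriented closed curve $C$ on $\mathbb{S}^2$ is a Gutkin curve with contact angle $\alpha\in(0,\pi]$ if there are parameterizations $x(t),y(t)$ of $C$ with $x'(t),y'(t)>0$, $x(t)\ne y(t)$, such that for every $t$ the geodesic chord from $x(t)$ to $y(t)$ makes angle $\alpha$ with $C$ at both ends: at $x(t)$ the angle between the positively oriented tangent and the chord direction towards $y(t)$, and at $y(t)$ the angle between the chord direction (from $x(t)$ towards $y(t)$) and the positively oriented tangent. With this convention, if $L(x,y)$ is the length of the chord, then $\partial L/\partial x=-\cos\alpha$ and $\partial L/\partial y=\cos\alpha$ along the family. *)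

(* Defs.v *)
From Stdlib Require Import Reals.
From Coquelicot Require Import Coquelicot.
Open Scope R_scope.

Definition V3 : Type := (R * R * R)%type.
Definition vx (u : V3) : R := fst (fst u).
Definition vy (u : V3) : R := snd (fst u).
Definition vz (u : V3) : R := snd u.
Definition dot (u v : V3) : R := vx u * vx v + vy u * vy v + vz u * vz v.
Definition cross (u v : V3) : V3 :=
  (vy u * vz v - vz u * vy v, vz u * vx v - vx u * vz v, vx u * vy v - vy u * vx v).
Definition scal (c : R) (u : V3) : V3 := (c * vx u, c * vy u, c * vz u).
Definition vsub (u v : V3) : V3 := (vx u - vx v, vy u - vy v, vz u - vz v).
Definition vopp (u : V3) : V3 := (- vx u, - vy u, - vz u).
Definition vnorm (u : V3) : R := sqrt (dot u u).

Definition smooth3 (g : R -> V3) : Prop :=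
  forall (n : nat) (s : R),
    ex_derive_n (fun r => vx (g r)) n s /\
    ex_derive_n (fun r => vy (g r)) n s /\
    ex_derive_n (fun r => vz (g r)) n s.
Definition dV (g : R -> V3) (s : R) : V3 :=
  (Derive (fun r => vx (g r)) s, Derive (fun r => vy (g r)) s,
   Derive (fun r => vz (g r)) s).

Definition sphere_curve (g : R -> V3) (Lc : R) : Prop :=
  0 < Lc /\ smooth3 g /\
  (forall s, vnorm (g s) = 1) /\
  (forall s, vnorm (dV g s) = 1) /\
  (forall s, g (s + Lc) = g s) /\
  (forall s1 s2, 0 <= s1 < Lc -> 0 <= s2 < Lc -> g s1 = g s2 -> s1 = s2).

(** Geodesic curvature w.r.t. the left normal g x g' (outer normal of S^2 is g). *)
Definition geod_curv (g : R -> V3) (s : R) : R :=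
  dot (dV (dV g) s) (cross (g s) (dV g s)).

(** Convex (positively oriented, bounding the region on its left):
    nonnegative geodesic curvature. *)
Definition convex_sphere_curve (g : R -> V3) (Lc : R) : Prop :=
  sphere_curve g Lc /\ forall s, 0 <= geod_curv g s.

(** Unit tangent vector at p of the (minimizing) great-circle chord from p to q,
    pointing towards q; and unit tangent at q of the same chord, oriented from
    p towards q. *)
Definition chord_dir_start (p q : V3) : V3 :=
  let w := vsub q (scal (dot p q) p) in scal (/ vnorm w) w.
Definition chord_dir_end (p q : V3) : V3 :=
  let w := vsub (scal (dot p q) q) p in scal (/ vnorm w) w.

(** (x, y) is a Gutkin chord family of the curve g with contact angle alpha:
    x, y are arc-length coordinates (lifted to R), increasing, parameterizing
    the curve, the endpoints are distinct (and not antipodal, so the geodesic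
    chord is well defined), and the chord makes angle alpha at both ends. *)
Definition gutkin_family (g : R -> V3) (alpha : R) (x y : R -> R) : Prop :=
  (forall t, ex_derive x t /\ 0 < Derive x t) /\
  (forall t, ex_derive y t /\ 0 < Derive y t) /\
  (forall s, exists t, g (x t) = g s) /\
  (forall s, exists t, g (y t) = g s) /\
  (forall t, g (x t) <> g (y t) /\ g (x t) <> vopp (g (y t))) /\
  (forall t, dot (dV g (x t)) (chord_dir_start (g (x t)) (g (y t))) = cos alpha) /\
  (forall t, dot (chord_dir_end (g (x t)) (g (y t))) (dV g (y t)) = cos alpha).

Definition cot (u : R) : R := cos u / sin u.

(* Main.v *)
From Pilot Require Import Defs.
From Stdlib Require Import Reals Lra Psatz ZArith.
From Coquelicot Require Import Coquelicot.
Import Pilot.Defs.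
Open Scope R_scope.


Lemma isd_mult (f h : R -> R) t df dh :
  is_derive f t df -> is_derive h t dh ->
  is_derive (fun r => f r * h r) t (df * h t + f t * dh).
Proof. intros H1 H2. apply (is_derive_mult f h t df dh H1 H2). intros; apply Rmult_comm. Qed.

Lemma isd_plus (f h : R -> R) t df dh :
  is_derive f t df -> is_derive h t dh ->
  is_derive (fun r => f r + h r) t (df + dh).
Proof. intros H1 H2. apply (is_derive_plus f h t df dh H1 H2). Qed.

Lemma isd_minus (f h : R -> R) t df dh :
  is_derive f t df -> is_derive h t dh ->
  is_derive (fun r => f r - h r) t (df - dh).
Proof. intros H1 H2. apply (is_derive_minus f h t df dh H1 H2). Qed.

Lemma isd_comp (f h : R -> R) t df dh :
  is_derive f (h t) df -> is_derive h t dh ->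
  is_derive (fun r => f (h r)) t (dh * df).
Proof. intros H1 H2. apply (is_derive_comp f h t df dh H1 H2). Qed.

Definition Dv3 (P : R -> V3) (t : R) (P' : V3) : Prop :=
  is_derive (fun r => vx (P r)) t (vx P') /\
  is_derive (fun r => vy (P r)) t (vy P') /\
  is_derive (fun r => vz (P r)) t (vz P').

Lemma Dv3_dot P Q t P' Q' : Dv3 P t P' -> Dv3 Q t Q' ->
  is_derive (fun r => dot (P r) (Q r)) t (dot P' (Q t) + dot (P t) Q').
Proof.
  intros [H1 [H2 H3]] [K1 [K2 K3]]. unfold dot.
  eapply is_derive_ext. { intro r. reflexivity. }
  replace (vx P' * vx (Q t) + vy P' * vy (Q t) + vz P' * vz (Q t) +
    (vx (P t) * vx Q' + vy (P t) * vy Q' + vz (P t) * vz Q')) with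
    ((vx P' * vx (Q t) + vx (P t) * vx Q') + (vy P' * vy (Q t) + vy (P t) * vy Q')
     + (vz P' * vz (Q t) + vz (P t) * vz Q')) by ring.
  apply isd_plus; [apply isd_plus|]; apply isd_mult; auto.
Qed.

Lemma Dv3_cross P Q t P' Q' : Dv3 P t P' -> Dv3 Q t Q' ->
  Dv3 (fun r => cross (P r) (Q r)) t
   (vy P' * vz (Q t) + vy (P t) * vz Q' - (vz P' * vy (Q t) + vz (P t) * vy Q'),
    vz P' * vx (Q t) + vz (P t) * vx Q' - (vx P' * vz (Q t) + vx (P t) * vz Q'),
    vx P' * vy (Q t) + vx (P t) * vy Q' - (vy P' * vx (Q t) + vy (P t) * vx Q')).
Proof.
  intros [H1 [H2 H3]] [K1 [K2 K3]]. unfold cross; simpl.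
  split; [|split]; simpl; apply isd_minus; apply isd_mult; auto.
Qed.

Lemma Dv3_comp P (h : R -> R) t P' dh : Dv3 P (h t) P' -> is_derive h t dh ->
  Dv3 (fun r => P (h r)) t (scal dh P').
Proof.
  intros [H1 [H2 H3]] K. unfold scal; simpl.
  split; [|split]; simpl; apply (isd_comp (fun r => _ (P r))); auto.
Qed.

Section Smooth.
Variable g : R -> V3.
Hypothesis Hs : smooth3 g.

Lemma Dv3_g s : Dv3 g s (dV g s).
Proof.
  destruct (Hs 1%nat s) as [A [B C]]; simpl in *.
  split; [|split]; simpl; apply Derive_correct; auto.
Qed.

Lemma Dv3_dg s : Dv3 (dV g) s (dV (dV g) s).
Proof.
  destruct (Hs 2%nat s) as [A [B C]]; simpl in *.
  split; [|split]; simpl; apply Derive_correct; auto.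
Qed.

Lemma Dv3_ddg s : exists D, Dv3 (dV (dV g)) s D.
Proof.
  destruct (Hs 3%nat s) as [A [B C]]; simpl in *.
  exists (Derive (fun r => vx (dV (dV g) r)) s, Derive (fun r => vy (dV (dV g) r)) s,
    Derive (fun r => vz (dV (dV g) r)) s).
  split; [|split]; simpl; apply Derive_correct; eauto.
Qed.
End Smooth.


Lemma isd_uniq (f : R -> R) t l1 l2 : is_derive f t l1 -> is_derive f t l2 -> l1 = l2.
Proof. intros H1 H2. apply is_derive_unique in H1. apply is_derive_unique in H2. congruence. Qed.

Lemma dot_ge0 u : 0 <= dot u u.
Proof. unfold dot. nra. Qed.

Lemma vnorm1 u : vnorm u = 1 -> dot u u = 1.
Proof. unfold vnorm. intro H. rewrite <- (sqrt_sqrt (dot u u)) by apply dot_ge0. rewrite H; ring. Qed.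

Lemma dot_comm u v : dot u v = dot v u.
Proof. unfold dot; ring. Qed.

Lemma isd_const_uniq (f : R -> R) t l k : (forall r, f r = k) -> is_derive f t l -> l = 0.
Proof.
  intros Hk H. apply (isd_uniq f t); auto.
  eapply is_derive_ext. { intro r. symmetry. apply Hk. } apply (is_derive_const k t).
Qed.

Section Sph.
Variable g : R -> V3.
Variable Lc : R.
Hypothesis Hc : sphere_curve g Lc.

Lemma sm : smooth3 g. Proof. apply Hc. Qed.
Lemma Hn1 s : vnorm (g s) = 1. Proof. destruct Hc as (_&_&H&_); auto. Qed.
Lemma Hn2 s : vnorm (dV g s) = 1. Proof. destruct Hc as (_&_&_&H&_); auto. Qed.

Lemma F1 s : dot (g s) (g s) = 1.
Proof. apply vnorm1. apply Hn1. Qed.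
Lemma F1' s : dot (dV g s) (dV g s) = 1.
Proof. apply vnorm1. apply Hn2. Qed.

Lemma F2 s : dot (g s) (dV g s) = 0.
Proof.
  pose proof (Dv3_dot g g s _ _ (Dv3_g g sm s) (Dv3_g g sm s)) as H.
  apply (isd_const_uniq _ _ _ 1 F1) in H. rewrite dot_comm in H. lra.
Qed.

Lemma F3 s : dot (dV g s) (dV (dV g) s) = 0.
Proof.
  pose proof (Dv3_dot _ _ s _ _ (Dv3_dg g sm s) (Dv3_dg g sm s)) as H.
  apply (isd_const_uniq _ _ _ 1 F1') in H. rewrite dot_comm in H. lra.
Qed.

Lemma F4 s : dot (g s) (dV (dV g) s) = -1.
Proof.
  pose proof (Dv3_dot _ _ s _ _ (Dv3_g g sm s) (Dv3_dg g sm s)) as H.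
  apply (isd_const_uniq _ _ _ 0 F2) in H. rewrite F1' in H. lra.
Qed.
End Sph.

Definition det3 (a b c d e f g h i : R) : R :=
  a * (e * i - f * h) - b * (d * i - f * g) + c * (d * h - e * g).

Lemma gram a b c d e f :
  dot (cross a b) c * dot (cross d e) f =
  det3 (dot a d) (dot a e) (dot a f) (dot b d) (dot b e) (dot b f)
       (dot c d) (dot c e) (dot c f).
Proof.
  destruct a as [[a1 a2] a3]; destruct b as [[b1 b2] b3]; destruct c as [[c1 c2] c3];
  destruct d as [[d1 d2] d3]; destruct e as [[e1 e2] e3]; destruct f as [[f1 f2] f3].
  unfold dot, cross, det3, vx, vy, vz; simpl. ring.
Qed.


Lemma alg_norm (a co si c S A B n1 n2 tt k1 k2 X Y Wq Wp dc S1 C1 S2 C2 e1 e2 : R) :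
  co*co + si*si = 1 -> 0 < si -> 0 < S -> S*S = 1 - c*c -> 0 < a ->
  A = co * S -> B = - co * S ->
  n1 = e1 * si * S -> n2 = e2 * si * S -> e1*e1 = 1 -> e2*e2 = 1 ->
  n1 * n2 = c*c*tt - A*B*c - tt ->
  k1 * n1 = Wq + c -> k2 * n2 = Wp + c -> dc = X * A + Y * B ->
  X * Wq + Y * tt = - co * c * dc / S ->
  X * tt + Y * Wp = co * c * dc / S ->
  0 < S1 -> 0 < S2 -> X = a * S1 / si -> Y = a * S2 / si ->
  k1 = si * C1 / S1 -> k2 = si * C2 / S2 ->
  e1 * C1 * S - S1 * c = e1 * e2 * S2 /\ e2 * C2 * S - S2 * c = e1 * e2 * S1.
Proof.
  intros Hcs Hsi HS HS2 Ha HA HB Hn1 Hn2 He1 He2 Hnn Hk1 Hk2 Hdc E1 E2 HS1 HS2' HX HY Hk1' Hk2'.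
  assert (Htt : tt = co*co*c - e1*e2*si*si).
  { subst n1 n2 A B. apply (Rmult_eq_reg_r (S*S)); [|nra].
    replace (c*c) with (1 - S*S) in Hnn by lra. lra. }
  assert (Hdc' : dc = co * S * (X - Y)) by (subst; ring).
  rewrite Hdc' in E1, E2.
  replace (- co * c * (co * S * (X - Y)) / S) with (- co*co*c*(X-Y)) in E1 by (field; lra).
  replace (co * c * (co * S * (X - Y)) / S) with (co*co*c*(X-Y)) in E2 by (field; lra).
  assert (HWq : Wq = k1 * n1 - c) by lra.
  assert (HWp : Wp = k2 * n2 - c) by lra.
  rewrite HWq, Htt in E1. rewrite HWp, Htt in E2.
  rewrite Hn1, Hn2, Hk1', Hk2', HX, HY in *.
  split.
  - apply (Rmult_eq_reg_l (a * si)); [|nra].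
    replace (a * si * (e1 * C1 * S - S1 * c)) with
     (a * S1 / si * (si * C1 / S1 * (e1 * si * S) - c + co*co*c) - a*S1/si*c*(co*co+si*si-1)) by (field; lra).
    rewrite Hcs.
    replace (a * si * (e1 * e2 * S2)) with (a * S2 / si * (e1*e2*si*si)) by (field; lra).
    nra.
  - apply (Rmult_eq_reg_l (a * si)); [|nra].
    replace (a * si * (e2 * C2 * S - S2 * c)) with
     (a * S2 / si * (si * C2 / S2 * (e2 * si * S) - c + co*co*c) - a*S2/si*c*(co*co+si*si-1)) by (field; lra).
    rewrite Hcs.
    replace (a * si * (e1 * e2 * S1)) with (a * S1 / si * (e1*e2*si*si)) by (field; lra).
    nra.
Qed.

Lemma case_a c S S1 C1 S2 C2 : 0 < S -> S*S = 1 - c*c -> S1*S1 + C1*C1 = 1 ->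
  C1 * S - S1 * c = S2 -> C2 * S - S2 * c = S1 -> C1*C2 - S1*S2 = c.
Proof.
  intros HS HS2 H1 E1 E2.
  assert (C2 = S1 * S + c * C1).
  { apply (Rmult_eq_reg_r S); [|lra].
    assert (E: S1*(S*S - (1 - c*c)) = 0) by (rewrite HS2; ring).
    assert (C2*S = S1 + S2*c) by lra. rewrite H, <- E1. lra. }
  subst C2 S2.
  assert (E: c*(S1*S1 + C1*C1 - 1) = 0) by (rewrite H1; ring). lra.
Qed.

Lemma case_b c S S1 C1 S2 C2 : 0 < S -> S*S = 1 - c*c -> S1*S1 + C1*C1 = 1 ->
  0 < S1 -> 0 < S2 -> 0 <= C1 -> 0 <= C2 ->
  - C1 * S - S1 * c = S2 -> - C2 * S - S2 * c = S1 -> False.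
Proof.
  intros HS HS2 H1 P1 P2 Q1 Q2 E1 E2.
  assert (S1 * C2 = - S1*S1*S + S1*C1*c).
  { apply (Rmult_eq_reg_r S); [|lra]. rewrite <- E1 in E2. nra. }
  assert (S1*C2 + C1*S2 = - S) by (rewrite <- E1; nra).
  nra.
Qed.

Lemma case_c c S S1 C1 S2 C2 : 0 < S -> S*S = 1 - c*c -> S1*S1 + C1*C1 = 1 ->
  - C1 * S - S1 * c = - S2 -> C2 * S - S2 * c = - S1 -> 0 < C1*S2 - C2*S1.
Proof.
  intros HS HS2 H1 E1 E2.
  assert (C2 = C1 * c - S1 * S).
  { apply (Rmult_eq_reg_r S); [|lra]. assert (S2 = C1*S + S1*c) by lra. subst S2.
    assert (E: S1*(S*S - (1 - c*c)) = 0) by (rewrite HS2; ring). lra. }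
  assert (S2 = C1*S + S1*c) by lra. subst.
  assert (E: S*(S1*S1 + C1*C1 - 1) = 0) by (rewrite H1; ring). lra.
Qed.

Lemma case_d c S S1 C1 S2 C2 : 0 < S -> S*S = 1 - c*c -> S2*S2 + C2*C2 = 1 ->
  C1 * S - S1 * c = - S2 -> - C2 * S - S2 * c = - S1 -> 0 < C2*S1 - C1*S2.
Proof.
  intros HS HS2 H1 E1 E2.
  assert (C1 = C2 * c - S2 * S).
  { apply (Rmult_eq_reg_r S); [|lra]. assert (S1 = C2*S + S2*c) by lra. subst S1.
    assert (E: S2*(S*S - (1 - c*c)) = 0) by (rewrite HS2; ring). lra. }
  assert (S1 = C2*S + S2*c) by lra. subst.
  assert (E: S*(S2*S2 + C2*C2 - 1) = 0) by (rewrite H1; ring). lra.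
Qed.


Lemma v3_eq (u v : V3) : vx u = vx v -> vy u = vy v -> vz u = vz v -> u = v.
Proof. destruct u as [[u1 u2] u3]; destruct v as [[v1 v2] v3]; unfold vx, vy, vz; simpl; intros; subst; auto. Qed.

Lemma dot_scal_r k u v : dot u (scal k v) = k * dot u v.
Proof. unfold dot, scal, vx, vy, vz; simpl; ring. Qed.
Lemma dot_scal_l k u v : dot (scal k u) v = k * dot u v.
Proof. unfold dot, scal, vx, vy, vz; simpl; ring. Qed.
Lemma dot_vsub_r u v w : dot u (vsub v w) = dot u v - dot u w.
Proof. unfold dot, vsub, vx, vy, vz; simpl; ring. Qed.
Lemma dot_vsub_l u v w : dot (vsub v w) u = dot v u - dot w u.
Proof. unfold dot, vsub, vx, vy, vz; simpl; ring. Qed.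

Lemma vx_opp u : vx (vopp u) = - vx u. Proof. reflexivity. Qed.
Lemma vy_opp u : vy (vopp u) = - vy u. Proof. reflexivity. Qed.
Lemma vz_opp u : vz (vopp u) = - vz u. Proof. reflexivity. Qed.

Lemma sos3 a b c : a*a + b*b + c*c = 0 -> a = 0 /\ b = 0 /\ c = 0.
Proof. intros H. assert (a*a = 0) by nra. assert (b*b=0) by nra. assert (c*c=0) by nra.
  split; [|split]; nra. Qed.

Section Main.
Variables (g : R -> V3) (Lc alpha a : R) (x y f : R -> R).
Hypothesis Hconv : convex_sphere_curve g Lc.
Hypothesis Halpha : 0 < alpha < PI.
Hypothesis Hfam : gutkin_family g alpha x y.
Hypothesis Ha : 0 < a.
Hypothesis Hx : forall t, is_derive x t
          (a / sqrt ((geod_curv g (x t)) ^ 2 + (sin alpha) ^ 2)).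
Hypothesis Hy : forall t, is_derive y t
          (a / sqrt ((geod_curv g (y t)) ^ 2 + (sin alpha) ^ 2)).
Hypothesis Hf : forall s, 0 < f s < PI /\ cot (f s) = geod_curv g s / sin alpha.

Lemma Hsc : sphere_curve g Lc. Proof. apply Hconv. Qed.
Lemma Hsm : smooth3 g. Proof. apply (sm g Lc Hsc). Qed.

Definition cc t := dot (g (x t)) (g (y t)).
Definition SS t := sqrt (1 - cc t * cc t).
Definition XX t := a / sqrt ((geod_curv g (x t)) ^ 2 + (sin alpha) ^ 2).
Definition YY t := a / sqrt ((geod_curv g (y t)) ^ 2 + (sin alpha) ^ 2).

Lemma si_pos : 0 < sin alpha. Proof. apply sin_gt_0; lra. Qed.

Lemma cc_bound t : -1 < cc t < 1.
Proof.
  destruct Hfam as (_&_&_&_&Hne&_). destruct (Hne t) as [N1 N2].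
  pose proof (F1 g Lc Hsc (x t)) as P. pose proof (F1 g Lc Hsc (y t)) as Q.
  unfold cc. set (p := g (x t)) in *. set (q := g (y t)) in *.
  unfold dot in *. split.
  - destruct (Rle_lt_dec (vx p * vx q + vy p * vy q + vz p * vz q) (-1)); auto.
    exfalso. apply N2.
    assert (E: (vx p + vx q)*(vx p + vx q) + (vy p + vy q)*(vy p + vy q) + (vz p + vz q)*(vz p + vz q) = 0).
    { assert (T: (vx p + vx q)*(vx p + vx q) + (vy p + vy q)*(vy p + vy q) + (vz p + vz q)*(vz p + vz q) = 2 + 2*(vx p * vx q + vy p * vy q + vz p * vz q)) by lra.
      pose proof (Rle_0_sqr (vx p + vx q)); pose proof (Rle_0_sqr (vy p + vy q)); pose proof (Rle_0_sqr (vz p + vz q)). unfold Rsqr in *. lra. }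
    apply sos3 in E. destruct E as (E1&E2&E3).
    apply v3_eq; rewrite ?vx_opp, ?vy_opp, ?vz_opp; lra.
  - destruct (Rle_lt_dec 1 (vx p * vx q + vy p * vy q + vz p * vz q)); auto.
    exfalso. apply N1.
    assert (E: (vx p - vx q)*(vx p - vx q) + (vy p - vy q)*(vy p - vy q) + (vz p - vz q)*(vz p - vz q) = 0).
    { assert (T: (vx p - vx q)*(vx p - vx q) + (vy p - vy q)*(vy p - vy q) + (vz p - vz q)*(vz p - vz q) = 2 - 2*(vx p * vx q + vy p * vy q + vz p * vz q)) by lra.
      pose proof (Rle_0_sqr (vx p - vx q)); pose proof (Rle_0_sqr (vy p - vy q)); pose proof (Rle_0_sqr (vz p - vz q)). unfold Rsqr in *. lra. }
    apply sos3 in E. destruct E as (E1&E2&E3).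
    apply v3_eq; lra.
Qed.

Lemma SS_pos t : 0 < SS t.
Proof. unfold SS. apply sqrt_lt_R0. pose proof (cc_bound t). nra. Qed.
Lemma SS_sq t : SS t * SS t = 1 - cc t * cc t.
Proof. unfold SS. apply sqrt_sqrt. pose proof (cc_bound t). nra. Qed.

Lemma dot_vsub_self q p k : dot p p = 1 -> dot q q = 1 ->
  dot (vsub q (scal k p)) (vsub q (scal k p)) = 1 - 2*k*dot p q + k*k.
Proof. intros H1 H2. rewrite dot_vsub_l, !dot_vsub_r, !dot_scal_l, !dot_scal_r.
  rewrite H1, H2, (dot_comm q p). ring. Qed.

Lemma A_eq t : dot (dV g (x t)) (g (y t)) = cos alpha * SS t.
Proof.
  destruct Hfam as (_&_&_&_&_&Hcs&_). pose proof (Hcs t) as H.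
  unfold chord_dir_start in H. cbv zeta in H.
  rewrite dot_scal_r, dot_vsub_r, dot_scal_r in H.
  rewrite (dot_comm _ (g (x t))), (F2 g Lc Hsc) in H.
  unfold vnorm in H. rewrite dot_vsub_self in H by apply (F1 g Lc Hsc).
  fold (cc t) in H. replace (1 - 2 * cc t * cc t + cc t * cc t) with (1 - cc t * cc t) in H by ring.
  fold (SS t) in H. rewrite <- H. pose proof (SS_pos t). field. lra.
Qed.

Lemma B_eq t : dot (g (x t)) (dV g (y t)) = - cos alpha * SS t.
Proof.
  destruct Hfam as (_&_&_&_&_&_&Hce). pose proof (Hce t) as H.
  unfold chord_dir_end in H. cbv zeta in H.
  rewrite dot_scal_l, dot_vsub_l, dot_scal_l in H.
  rewrite (F2 g Lc Hsc) in H.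
  assert (E: dot (vsub (scal (dot (g (x t)) (g (y t))) (g (y t))) (g (x t)))
      (vsub (scal (dot (g (x t)) (g (y t))) (g (y t))) (g (x t))) = 1 - cc t * cc t).
  { rewrite !dot_vsub_l, !dot_vsub_r, !dot_scal_l, !dot_scal_r.
    rewrite !(F1 g Lc Hsc), (dot_comm (g (y t)) (g (x t))). fold (cc t). ring. }
  unfold vnorm in H. rewrite E in H. fold (SS t) in H.
  pose proof (SS_pos t). rewrite Rmult_0_r, Rminus_0_l in H.
  replace (dot (g (x t)) (dV g (y t))) with (- (/ SS t * (- dot (g (x t)) (dV g (y t)))) * SS t) by (field; lra).
  rewrite H. ring.
Qed.

Lemma frame_expand p T w q : dot p p = 1 -> dot p T = 0 -> dot T T = 1 -> dot w p = -1 -> dot w T = 0 ->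
  dot (cross p T) w * dot (cross p T) q = dot w q + dot p q.
Proof.
  intros H1 H2 H3 H4 H5. rewrite gram. rewrite (dot_comm T p), H1, H2, H3, H4, H5. unfold det3. ring.
Qed.

Lemma frame_sq p T q : dot p p = 1 -> dot p T = 0 -> dot T T = 1 -> dot q q = 1 ->
  dot (cross p T) q * dot (cross p T) q = 1 - dot T q * dot T q - dot p q * dot p q.
Proof.
  intros H1 H2 H3 H4. rewrite gram. rewrite (dot_comm T p), (dot_comm q p), (dot_comm q T), H1, H2, H3, H4.
  unfold det3. ring.
Qed.

Lemma frame_prod p T1 q T2 : dot p p = 1 -> dot q q = 1 -> dot p T1 = 0 -> dot q T2 = 0 ->
  dot (cross p T1) q * dot (cross q T2) p =
  dot p q * dot p q * dot T1 T2 - dot T1 q * dot p T2 * dot p q - dot T1 T2.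
Proof.
  intros H1 H2 H3 H4. rewrite gram. rewrite (dot_comm T1 p), (dot_comm q p), H1, H2, H3, H4.
  unfold det3. ring.
Qed.

Lemma Dp t : Dv3 (fun r => g (x r)) t (scal (XX t) (dV g (x t))).
Proof. apply (Dv3_comp g x). apply (Dv3_g g Hsm). apply Hx. Qed.
Lemma Dq t : Dv3 (fun r => g (y r)) t (scal (YY t) (dV g (y t))).
Proof. apply (Dv3_comp g y). apply (Dv3_g g Hsm). apply Hy. Qed.
Lemma DT1 t : Dv3 (fun r => dV g (x r)) t (scal (XX t) (dV (dV g) (x t))).
Proof. apply (Dv3_comp (dV g) x). apply (Dv3_dg g Hsm). apply Hx. Qed.
Lemma DT2 t : Dv3 (fun r => dV g (y r)) t (scal (YY t) (dV (dV g) (y t))).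
Proof. apply (Dv3_comp (dV g) y). apply (Dv3_dg g Hsm). apply Hy. Qed.

Definition dcc t := XX t * dot (dV g (x t)) (g (y t)) + YY t * dot (g (x t)) (dV g (y t)).

Lemma d_cc t : is_derive cc t (dcc t).
Proof.
  pose proof (Dv3_dot _ _ t _ _ (Dp t) (Dq t)) as H. unfold cc, dcc.
  rewrite dot_scal_l, dot_scal_r in H. exact H.
Qed.

Lemma d_SS t : is_derive SS t (- cc t * dcc t / SS t).
Proof.
  assert (H : is_derive (fun r => 1 - cc r * cc r) t (0 - (dcc t * cc t + cc t * dcc t))).
  { apply (isd_minus (fun _ => 1)). apply (is_derive_const 1 t). apply isd_mult; apply d_cc. }
  apply is_derive_sqrt in H. 2: { pose proof (cc_bound t). nra. }
  unfold SS. eapply is_derive_ext. { intro r. reflexivity. }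
  replace (- cc t * dcc t / sqrt (1 - cc t * cc t)) with
    ((0 - (dcc t * cc t + cc t * dcc t)) / (2 * sqrt (1 - cc t * cc t))).
  exact H. pose proof (SS_pos t). unfold SS in *. field. lra.
Qed.

Lemma E1 t : XX t * dot (dV (dV g) (x t)) (g (y t)) + YY t * dot (dV g (x t)) (dV g (y t))
   = - cos alpha * cc t * dcc t / SS t.
Proof.
  pose proof (Dv3_dot _ _ t _ _ (DT1 t) (Dq t)) as H.
  rewrite dot_scal_l, dot_scal_r in H.
  assert (H2 : is_derive (fun r => dot (dV g (x r)) (g (y r))) t (cos alpha * (- cc t * dcc t / SS t))).
  { eapply is_derive_ext. { intro r. symmetry. apply A_eq. } apply is_derive_scal. apply d_SS. }
  rewrite (isd_uniq _ _ _ _ H H2). field. pose proof (SS_pos t). lra.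
Qed.

Lemma E2 t : XX t * dot (dV g (x t)) (dV g (y t)) + YY t * dot (g (x t)) (dV (dV g) (y t))
   = cos alpha * cc t * dcc t / SS t.
Proof.
  pose proof (Dv3_dot _ _ t _ _ (Dp t) (DT2 t)) as H.
  rewrite dot_scal_l, dot_scal_r in H.
  assert (H2 : is_derive (fun r => dot (g (x r)) (dV g (y r))) t (- cos alpha * (- cc t * dcc t / SS t))).
  { eapply is_derive_ext. { intro r. symmetry. apply B_eq. } apply is_derive_scal. apply d_SS. }
  rewrite (isd_uniq _ _ _ _ H H2). field. pose proof (SS_pos t). lra.
Qed.

Lemma f_facts s : 0 < sin (f s) /\ 0 <= cos (f s) /\ f s <= PI/2 /\
  geod_curv g s = sin alpha * cos (f s) / sin (f s) /\
  sqrt (geod_curv g s ^ 2 + sin alpha ^ 2) = sin alpha / sin (f s).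
Proof.
  destruct (Hf s) as [Hr Hc]. pose proof si_pos as Hsi.
  assert (Hs : 0 < sin (f s)) by (apply sin_gt_0; lra).
  assert (Hk : geod_curv g s = sin alpha * cos (f s) / sin (f s)).
  { unfold cot in Hc. apply (Rmult_eq_reg_r (/ sin alpha)). 2: { apply Rinv_neq_0_compat; lra. }
    rewrite <- Rdiv_def, <- Hc. field. lra. }
  assert (Hk0 : 0 <= geod_curv g s) by (apply Hconv).
  assert (Hc0 : 0 <= cos (f s)).
  { replace (cos (f s)) with (geod_curv g s * sin (f s) / sin alpha) by (rewrite Hk; field; lra).
    apply Rmult_le_pos; [apply Rmult_le_pos; lra | left; apply Rinv_0_lt_compat; lra]. }
  split; [auto|split; [auto|split; [|split; [auto|]]]].
  - destruct (Rle_lt_dec (f s) (PI/2)); auto. exfalso.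
    assert (cos (f s) < 0) by (apply cos_lt_0; lra). lra.
  - rewrite Hk. replace ((sin alpha * cos (f s) / sin (f s)) ^ 2 + sin alpha ^ 2) with
      ((sin alpha / sin (f s))^2).
    + apply sqrt_pow2. left. apply Rdiv_lt_0_compat; lra.
    + pose proof (sin2_cos2 (f s)) as E. unfold Rsqr in E.
      replace ((sin alpha * cos (f s) / sin (f s)) ^ 2 + sin alpha ^ 2) with
        (sin alpha ^ 2 * (sin (f s) * sin (f s) + cos (f s) * cos (f s)) / sin (f s) ^ 2) by (field; lra).
      rewrite E. field. lra.
Qed.

Lemma XX_eq t : XX t = a * sin (f (x t)) / sin alpha.
Proof. unfold XX. destruct (f_facts (x t)) as (A1&_&_&_&A5). rewrite A5. pose proof si_pos. field. lra. Qed.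
Lemma YY_eq t : YY t = a * sin (f (y t)) / sin alpha.
Proof. unfold YY. destruct (f_facts (y t)) as (A1&_&_&_&A5). rewrite A5. pose proof si_pos. field. lra. Qed.

Definition n1 t := dot (cross (g (x t)) (dV g (x t))) (g (y t)).
Definition n2 t := dot (cross (g (y t)) (dV g (y t))) (g (x t)).

Ltac finsq := match goal with |- context [SS ?t] =>
  let H := fresh in let E := fresh in
  pose proof (SS_sq t) as H; pose proof (sin2_cos2 alpha) as E; unfold Rsqr in E;
  let X1 := fresh in let X2 := fresh in
  assert (X2: sin alpha * SS t * (sin alpha * SS t) = sin alpha * sin alpha * (1 - cc t * cc t)) by (rewrite <- H; ring);
  rewrite X2; try (replace (- cos alpha * SS t * (- cos alpha * SS t)) with (cos alpha * SS t * (cos alpha * SS t)) by ring);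
  assert (X1: cos alpha * SS t * (cos alpha * SS t) = cos alpha * cos alpha * (1 - cc t * cc t)) by (rewrite <- H; ring);
  rewrite X1; replace (sin alpha * sin alpha) with (1 - cos alpha * cos alpha) by lra; ring end.

Lemma n1_sq t : n1 t * n1 t = (sin alpha * SS t) * (sin alpha * SS t).
Proof.
  unfold n1. rewrite frame_sq; try apply (F1 g Lc Hsc); try apply (F2 g Lc Hsc); try apply (F1' g Lc Hsc).
  rewrite A_eq. fold (cc t). finsq.
Qed.

Lemma n2_sq t : n2 t * n2 t = (sin alpha * SS t) * (sin alpha * SS t).
Proof.
  unfold n2. rewrite frame_sq; try apply (F1 g Lc Hsc); try apply (F2 g Lc Hsc); try apply (F1' g Lc Hsc).
  rewrite (dot_comm (dV g (y t))), B_eq, (dot_comm (g (y t))). fold (cc t).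
  finsq.
Qed.

Lemma pt t e1 e2 : n1 t = e1 * sin alpha * SS t -> n2 t = e2 * sin alpha * SS t ->
  e1 * e1 = 1 -> e2 * e2 = 1 ->
  e1 * cos (f (x t)) * SS t - sin (f (x t)) * cc t = e1 * e2 * sin (f (y t)) /\
  e2 * cos (f (y t)) * SS t - sin (f (y t)) * cc t = e1 * e2 * sin (f (x t)).
Proof.
  intros Hn1 Hn2 He1 He2.
  destruct (f_facts (x t)) as (P1&Q1&_&K1&_). destruct (f_facts (y t)) as (P2&Q2&_&K2&_).
  pose proof (sin2_cos2 alpha) as E. unfold Rsqr in E.
  eapply (alg_norm a (cos alpha) (sin alpha) (cc t) (SS t)
    (dot (dV g (x t)) (g (y t))) (dot (g (x t)) (dV g (y t))) (n1 t) (n2 t)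
    (dot (dV g (x t)) (dV g (y t))) (geod_curv g (x t)) (geod_curv g (y t)) (XX t) (YY t)
    (dot (dV (dV g) (x t)) (g (y t))) (dot (g (x t)) (dV (dV g) (y t))) (dcc t)); eauto.
  - lra.
  - apply si_pos.
  - apply SS_pos.
  - apply SS_sq.
  - apply A_eq.
  - apply B_eq.
  - unfold n1, n2. rewrite frame_prod; try apply (F1 g Lc Hsc); try apply (F2 g Lc Hsc). reflexivity.
  - unfold n1, geod_curv. rewrite (dot_comm (dV (dV g) (x t))). apply frame_expand;
      try apply (F1 g Lc Hsc); try apply (F2 g Lc Hsc); try apply (F1' g Lc Hsc).
    rewrite dot_comm; apply (F4 g Lc Hsc). rewrite dot_comm; apply (F3 g Lc Hsc).
  - unfold n2, geod_curv. rewrite (dot_comm (dV (dV g) (y t))).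
    rewrite (dot_comm (g (x t)) (dV (dV g) (y t))). unfold cc. rewrite (dot_comm (g (x t)) (g (y t))).
    apply frame_expand;
      try apply (F1 g Lc Hsc); try apply (F2 g Lc Hsc); try apply (F1' g Lc Hsc).
    rewrite dot_comm; apply (F4 g Lc Hsc). rewrite dot_comm; apply (F3 g Lc Hsc).
  - apply E1.
  - apply E2.
  - apply XX_eq.
  - apply YY_eq.
Qed.

End Main.


Lemma isd_cont (h : R -> R) t l : is_derive h t l -> continuity_pt h t.
Proof. intro H. apply is_derive_Reals in H. apply derivable_continuous_pt. exists l. exact H. Qed.

Lemma const_sign (h : R -> R) : continuity h -> (forall t, h t <> 0) ->
  forall t u, 0 < h t -> 0 < h u.
Proof.
  intros Hc Hn t u Ht. destruct (Rtotal_order (h u) 0) as [Hu|[Hu|Hu]]; [|exfalso; exact (Hn u Hu)|exact Hu].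
  exfalso. destruct (Rtotal_order u t) as [Hlt|[Heq|Hgt]].
  - destruct (IVT h u t Hc Hlt Hu Ht) as [z [_ Hz]]. exact (Hn z Hz).
  - subst; lra.
  - assert (Hc' : continuity (fun r => - h r)) by (apply continuity_opp; exact Hc).
    destruct (IVT (fun r => - h r) t u Hc' Hgt) as [z [_ Hz]]; try lra. apply (Hn z); lra.
Qed.

Lemma shift_derive (h : R -> R) L s : (forall r, h (r + L) = h r) -> ex_derive h (s + L) ->
  Derive h (s + L) = Derive h s.
Proof.
  intros Hp He. apply Derive_correct in He.
  assert (H1 : is_derive (fun r => r + L) s 1).
  { replace 1 with (1 + 0) by ring. apply isd_plus. apply (is_derive_id s). apply (is_derive_const L s). }
  pose proof (isd_comp h (fun r => r + L) s _ _ He H1) as H2.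
  assert (H3 : is_derive h s (1 * Derive h (s + L))).
  { eapply is_derive_ext; [|exact H2]. intro r. simpl. apply Hp. }
  apply is_derive_unique in H3. rewrite H3. ring.
Qed.

Lemma per_nat {T} (G : R -> T) L : (forall s, G (s + L) = G s) ->
  forall n s, G (s + INR n * L) = G s /\ G (s - INR n * L) = G s.
Proof.
  intros Hp n. induction n as [|n IH]; intro s.
  - simpl. replace (s + 0 * L) with s by ring. replace (s - 0 * L) with s by ring. auto.
  - rewrite S_INR. split.
    + replace (s + (INR n + 1) * L) with ((s + INR n * L) + L) by ring. rewrite Hp. apply IH.
    + rewrite <- (Hp (s - (INR n + 1) * L)). replace (s - (INR n + 1) * L + L) with (s - INR n * L) by ring.
      apply IH.
Qed.

Lemma per_reduce {T} (G : R -> T) L : 0 < L -> (forall s, G (s + L) = G s) ->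
  forall s, exists r, 0 <= r < L /\ G r = G s.
Proof.
  intros HL Hp s. destruct (archimed (s / L)) as [A1 A2].
  set (m := (up (s / L) - 1)%Z).
  assert (Hm : IZR m = IZR (up (s / L)) - 1) by (unfold m; rewrite minus_IZR; reflexivity).
  exists (s - IZR m * L). split.
  - assert (s = (s / L) * L) by (field; lra).
    split; nra.
  - destruct (Z_le_gt_dec 0 m) as [Hpos|Hneg].
    + destruct (Z_of_nat_complete m Hpos) as [n Hn]. rewrite Hn, <- INR_IZR_INZ. apply (per_nat G L Hp).
    + assert (Hm2 : (0 <= - m)%Z) by lia. destruct (Z_of_nat_complete (- m) Hm2) as [n Hn].
      assert (IZR m = - INR n) by (rewrite INR_IZR_INZ, <- Hn, opp_IZR; ring).
      rewrite H. replace (s - - INR n * L) with (s + INR n * L) by ring. apply (per_nat G L Hp).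
Qed.

Lemma dV_per (h : R -> V3) L : (forall r, h (r + L) = h r) ->
  (forall s, ex_derive (fun r => vx (h r)) s /\ ex_derive (fun r => vy (h r)) s /\ ex_derive (fun r => vz (h r)) s) ->
  forall s, dV h (s + L) = dV h s.
Proof.
  intros Hp He s. destruct (He (s + L)) as (E1&E2&E3). unfold dV.
  rewrite !(shift_derive _ L s); auto; intro r; rewrite Hp; auto.
Qed.

Section Final.
Variables (g : R -> V3) (Lc alpha a : R) (x y f : R -> R).
Hypothesis Hconv : convex_sphere_curve g Lc.
Hypothesis Halpha : 0 < alpha < PI.
Hypothesis Hfam : gutkin_family g alpha x y.
Hypothesis Ha : 0 < a.
Hypothesis Hx : forall t, is_derive x t
          (a / sqrt ((geod_curv g (x t)) ^ 2 + (sin alpha) ^ 2)).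
Hypothesis Hy : forall t, is_derive y t
          (a / sqrt ((geod_curv g (y t)) ^ 2 + (sin alpha) ^ 2)).
Hypothesis Hf : forall s, 0 < f s < PI /\ cot (f s) = geod_curv g s / sin alpha.

Let Hsc : sphere_curve g Lc := Hsc g Lc Hconv.
Let Hsm : smooth3 g := Hsm g Lc Hconv.

Lemma Lpos : 0 < Lc. Proof. apply Hsc. Qed.
Lemma gper s : g (s + Lc) = g s. Proof. destruct Hsc as (_&_&_&_&H&_). apply H. Qed.
Lemma ginj s1 s2 : 0 <= s1 < Lc -> 0 <= s2 < Lc -> g s1 = g s2 -> s1 = s2.
Proof. destruct Hsc as (_&_&_&_&_&H). apply H. Qed.

Lemma dgper s : dV g (s + Lc) = dV g s.
Proof. apply dV_per. apply gper. intro r. destruct (Hsm 1%nat r) as (A&B&C). simpl in *. auto. Qed.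
Lemma ddgper s : dV (dV g) (s + Lc) = dV (dV g) s.
Proof. apply dV_per. apply dgper. intro r. destruct (Hsm 2%nat r) as (A&B&C). simpl in *. auto. Qed.
Lemma kper s : geod_curv g (s + Lc) = geod_curv g s.
Proof. unfold geod_curv. rewrite gper, dgper, ddgper. reflexivity. Qed.

Lemma k_cont s : continuity_pt (geod_curv g) s.
Proof.
  destruct (Dv3_ddg g Hsm s) as [D HD].
  pose proof (Dv3_cross _ _ s _ _ (Dv3_g g Hsm s) (Dv3_dg g Hsm s)) as HC.
  pose proof (Dv3_dot _ _ s _ _ HD HC) as H. eapply isd_cont. exact H.
Qed.

Lemma red s : exists r, 0 <= r < Lc /\ g r = g s /\ geod_curv g r = geod_curv g s.
Proof.
  destruct (per_reduce (fun s => (g s, geod_curv g s)) Lc Lpos) with (s := s) as [r [Hr E]].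
  { intro u. rewrite gper, kper. reflexivity. }
  exists r. inversion E. auto.
Qed.

Lemma kmax : exists M, (forall s, geod_curv g s <= geod_curv g M) /\
  (forall s, g s = g M -> geod_curv g s = geod_curv g M).
Proof.
  destruct (continuity_ab_maj (geod_curv g) 0 Lc) as [M [HM HMr]].
  { left; apply Lpos. } { intros; apply k_cont. }
  assert (Hred : forall s, 0 <= s < Lc -> geod_curv g s <= geod_curv g M) by (intros; apply HM; lra).
  destruct (red M) as [M' [HM' [EgM EkM]]].
  exists M'. split.
  - intro s. destruct (red s) as [r [Hr [Eg Ek]]]. rewrite <- Ek, EkM. apply Hred; auto.
  - intros s Hs. destruct (red s) as [r [Hr [Eg Ek]]]. rewrite <- Ek.
    assert (r = M') by (apply ginj; auto; congruence). subst. reflexivity.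
Qed.

Lemma n1_cont : continuity (n1 g x y).
Proof.
  intro t. pose proof (Dv3_cross _ _ t _ _ (Dp g Lc alpha a x Hconv Hx t) (DT1 g Lc alpha a x Hconv Hx t)) as HC.
  pose proof (Dv3_dot _ _ t _ _ HC (Dq g Lc alpha a y Hconv Hy t)) as H. eapply isd_cont. exact H.
Qed.

Lemma n2_cont : continuity (n2 g x y).
Proof.
  intro t. pose proof (Dv3_cross _ _ t _ _ (Dq g Lc alpha a y Hconv Hy t) (DT2 g Lc alpha a y Hconv Hy t)) as HC.
  pose proof (Dv3_dot _ _ t _ _ HC (Dp g Lc alpha a x Hconv Hx t)) as H. eapply isd_cont. exact H.
Qed.

Lemma sq_sign u v : u*u = v*v -> 0 < v -> (0 < u -> u = 1 * v) /\ (u < 0 -> u = -1 * v).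
Proof. intros H Hv. split; intro Hu; nra. Qed.

Lemma Sp t : 0 < sin alpha * SS g x y t.
Proof. apply Rmult_lt_0_compat. apply (si_pos alpha Halpha). apply (SS_pos g Lc alpha x y Hconv Hfam). Qed.

Lemma n1_ne t : n1 g x y t <> 0.
Proof. intro H. pose proof (n1_sq g Lc alpha x y Hconv Hfam t) as E. rewrite H in E. pose proof (Sp t). nra. Qed.
Lemma n2_ne t : n2 g x y t <> 0.
Proof. intro H. pose proof (n2_sq g Lc alpha x y Hconv Hfam t) as E. rewrite H in E. pose proof (Sp t). nra. Qed.

Lemma n1_form t : (0 < n1 g x y t -> n1 g x y t = 1 * sin alpha * SS g x y t) /\
                  (n1 g x y t < 0 -> n1 g x y t = -1 * sin alpha * SS g x y t).
Proof. rewrite !Rmult_assoc. apply sq_sign. rewrite (n1_sq g Lc alpha x y Hconv Hfam); auto. apply Sp. Qed.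
Lemma n2_form t : (0 < n2 g x y t -> n2 g x y t = 1 * sin alpha * SS g x y t) /\
                  (n2 g x y t < 0 -> n2 g x y t = -1 * sin alpha * SS g x y t).
Proof. rewrite !Rmult_assoc. apply sq_sign. rewrite (n2_sq g Lc alpha x y Hconv Hfam); auto. apply Sp. Qed.

Lemma sgn_const (h : R -> R) : continuity h -> (forall t, h t <> 0) ->
  forall t u, (0 < h t -> 0 < h u) /\ (h t < 0 -> h u < 0).
Proof.
  intros Hc Hn t u. split.
  - apply const_sign; auto.
  - intro Ht. assert (0 < - h u); [|lra].
    apply (const_sign (fun r => - h r)) with (t := t).
    + apply continuity_opp; auto.
    + intros r Hr. apply (Hn r). lra.
    + lra.
Qed.

Lemma kdiff t : geod_curv g (y t) - geod_curv g (x t) =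
  sin alpha * (cos (f (y t)) * sin (f (x t)) - cos (f (x t)) * sin (f (y t))) / (sin (f (x t)) * sin (f (y t))).
Proof.
  destruct (f_facts g Lc alpha f Hconv Halpha Hf (x t)) as (P1&_&_&K1&_).
  destruct (f_facts g Lc alpha f Hconv Halpha Hf (y t)) as (P2&_&_&K2&_).
  rewrite K1, K2. field. lra.
Qed.

Lemma kdiff_pos t : 0 < cos (f (y t)) * sin (f (x t)) - cos (f (x t)) * sin (f (y t)) ->
  geod_curv g (x t) < geod_curv g (y t).
Proof.
  intro H. destruct (f_facts g Lc alpha f Hconv Halpha Hf (x t)) as (P1&_&_&_&_).
  destruct (f_facts g Lc alpha f Hconv Halpha Hf (y t)) as (P2&_&_&_&_).
  pose proof (kdiff t) as E. pose proof (si_pos alpha Halpha).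
  assert (0 < sin alpha * (cos (f (y t)) * sin (f (x t)) - cos (f (x t)) * sin (f (y t))) / (sin (f (x t)) * sin (f (y t)))).
  { apply Rdiv_lt_0_compat; nra. } lra.
Qed.

Lemma kdiff_neg t : 0 < cos (f (x t)) * sin (f (y t)) - cos (f (y t)) * sin (f (x t)) ->
  geod_curv g (y t) < geod_curv g (x t).
Proof.
  intro H. destruct (f_facts g Lc alpha f Hconv Halpha Hf (x t)) as (P1&_&_&_&_).
  destruct (f_facts g Lc alpha f Hconv Halpha Hf (y t)) as (P2&_&_&_&_).
  pose proof (kdiff t) as E. pose proof (si_pos alpha Halpha).
  assert (0 < sin alpha * (cos (f (x t)) * sin (f (y t)) - cos (f (y t)) * sin (f (x t))) / (sin (f (x t)) * sin (f (y t)))).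
  { apply Rdiv_lt_0_compat; nra. }
  assert (E2: sin alpha * (cos (f (y t)) * sin (f (x t)) - cos (f (x t)) * sin (f (y t))) / (sin (f (x t)) * sin (f (y t)))
     = - (sin alpha * (cos (f (x t)) * sin (f (y t)) - cos (f (y t)) * sin (f (x t))) / (sin (f (x t)) * sin (f (y t))))).
  { field. lra. }
  lra.
Qed.

Lemma all_pos t : 0 < n1 g x y t /\ 0 < n2 g x y t.
Proof.
  pose proof (sgn_const _ n1_cont n1_ne) as C1. pose proof (sgn_const _ n2_cont n2_ne) as C2.
  pose proof (n1_ne 0) as Z1. pose proof (n2_ne 0) as Z2.
  destruct Hfam as (_&_&Hsx&Hsy&_).
  assert (Hpt : forall t e1 e2, n1 g x y t = e1 * sin alpha * SS g x y t ->
     n2 g x y t = e2 * sin alpha * SS g x y t -> e1 * e1 = 1 -> e2 * e2 = 1 -> _)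
    by exact (pt g Lc alpha a x y f Hconv Halpha Hfam Ha Hx Hy Hf).
  destruct (kmax) as [M [HM1 HM2]].
  destruct (Rtotal_order (n1 g x y 0) 0) as [N1|[N1|N1]]; [|contradiction|];
  destruct (Rtotal_order (n2 g x y 0) 0) as [N2|[N2|N2]]; try contradiction.
  -
    exfalso. destruct (Hpt 0 (-1) (-1)) as [E1 E2]; [apply n1_form; auto|apply n2_form; auto|ring|ring|].
    destruct (f_facts g Lc alpha f Hconv Halpha Hf (x 0)) as (P1&Q1&_&_&_).
    destruct (f_facts g Lc alpha f Hconv Halpha Hf (y 0)) as (P2&Q2&_&_&_).
    pose proof (sin2_cos2 (f (x 0))) as S1. unfold Rsqr in S1.
    apply (case_b (cc g x y 0) (SS g x y 0) (sin (f (x 0))) (cos (f (x 0))) (sin (f (y 0))) (cos (f (y 0))));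
      auto; try lra.
    apply (SS_pos g Lc alpha x y Hconv Hfam). apply (SS_sq g Lc alpha x y Hconv Hfam).
  - (* n1 < 0, n2 > 0 : kappa(y) < kappa(x) everywhere *)
    exfalso. destruct (Hsy M) as [t0 Ht0].
    assert (A1 : n1 g x y t0 < 0) by (apply (proj2 (C1 0 t0)); auto).
    assert (A2 : 0 < n2 g x y t0) by (apply (proj1 (C2 0 t0)); auto).
    destruct (Hpt t0 (-1) 1) as [E1 E2]; [apply n1_form; auto|apply n2_form; auto|ring|ring|].
    pose proof (sin2_cos2 (f (x t0))) as S1. unfold Rsqr in S1.
    assert (K : 0 < cos (f (x t0)) * sin (f (y t0)) - cos (f (y t0)) * sin (f (x t0))).
    { apply (case_c (cc g x y t0) (SS g x y t0)); auto; try lra.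
      apply (SS_pos g Lc alpha x y Hconv Hfam). apply (SS_sq g Lc alpha x y Hconv Hfam). }
    apply kdiff_neg in K. rewrite (HM2 _ Ht0) in K. pose proof (HM1 (x t0)). lra.
  -
    exfalso. destruct (Hsx M) as [t0 Ht0].
    assert (A1 : 0 < n1 g x y t0) by (apply (proj1 (C1 0 t0)); auto).
    assert (A2 : n2 g x y t0 < 0) by (apply (proj2 (C2 0 t0)); auto).
    destruct (Hpt t0 1 (-1)) as [E1 E2]; [apply n1_form; auto|apply n2_form; auto|ring|ring|].
    pose proof (sin2_cos2 (f (y t0))) as S1. unfold Rsqr in S1.
    assert (K : 0 < cos (f (y t0)) * sin (f (x t0)) - cos (f (x t0)) * sin (f (y t0))).
    { apply (case_d (cc g x y t0) (SS g x y t0)); auto; try lra.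
      apply (SS_pos g Lc alpha x y Hconv Hfam). apply (SS_sq g Lc alpha x y Hconv Hfam). }
    apply kdiff_pos in K. rewrite (HM2 _ Ht0) in K. pose proof (HM1 (y t0)). lra.
  - split; [apply (proj1 (C1 0 t)) | apply (proj1 (C2 0 t))]; auto.
Qed.

End Final.

Lemma acos_isd u : -1 < u < 1 -> is_derive acos u (-1 / sqrt (1 - u²)).
Proof.
  intro H. apply is_derive_Reals. pose (pr := derivable_pt_acos u H).
  rewrite <- (derive_pt_acos u H). exact (proj2_sig pr).
Qed.

Theorem mainTheorem5
  (g : R -> V3) (Lc alpha a : R) (x y f : R -> R)
  (Hconv : convex_sphere_curve g Lc)
  (Halpha : 0 < alpha < PI)
  (Hfam : gutkin_family g alpha x y)
  (Ha : 0 < a)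
  (Hx : forall t, is_derive x t
          (a / sqrt ((geod_curv g (x t)) ^ 2 + (sin alpha) ^ 2)))
  (Hy : forall t, is_derive y t
          (a / sqrt ((geod_curv g (y t)) ^ 2 + (sin alpha) ^ 2)))
  (Hf : forall s, 0 < f s < PI /\ cot (f s) = geod_curv g s / sin alpha) :
  forall t : R,
    is_derive (fun u => f (x u) + f (y u)) t
      (a * cot alpha * (sin (f (y t)) - sin (f (x t)))).
Proof.
  assert (Hsum : forall t, f (x t) + f (y t) = acos (cc g x y t)).
  { intro t. destruct (all_pos g Lc alpha a x y f Hconv Halpha Hfam Ha Hx Hy Hf t) as [N1 N2].
    destruct (pt g Lc alpha a x y f Hconv Halpha Hfam Ha Hx Hy Hf t 1 1) as [E1 E2].
    { apply (n1_form g Lc alpha x y Hconv Halpha Hfam); auto. }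
    { apply (n2_form g Lc alpha x y Hconv Halpha Hfam); auto. }
    ring. ring.
    destruct (f_facts g Lc alpha f Hconv Halpha Hf (x t)) as (P1&Q1&R1&_&_).
    destruct (f_facts g Lc alpha f Hconv Halpha Hf (y t)) as (P2&Q2&R2&_&_).
    pose proof (sin2_cos2 (f (x t))) as S1. unfold Rsqr in S1.
    assert (C : cos (f (x t)) * cos (f (y t)) - sin (f (x t)) * sin (f (y t)) = cc g x y t).
    { apply (case_a (cc g x y t) (SS g x y t)); auto; try lra.
      apply (SS_pos g Lc alpha x y Hconv Hfam). apply (SS_sq g Lc alpha x y Hconv Hfam). }
    rewrite <- C, <- cos_plus. rewrite acos_cos; auto.
    pose proof (Hf (x t)); pose proof (Hf (y t)). lra. }
  intro t.
  pose proof (cc_bound g Lc alpha x y Hconv Hfam t) as Hb.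
  pose proof (isd_comp acos (cc g x y) t _ _ (acos_isd _ Hb) (d_cc g Lc alpha a x y Hconv Hx Hy t)) as H.
  eapply is_derive_ext. { intro u. symmetry. apply Hsum. }
  replace (a * cot alpha * (sin (f (y t)) - sin (f (x t)))) with
    (dcc g alpha a x y t * (-1 / sqrt (1 - (cc g x y t)²))); [exact H|].
  unfold dcc. rewrite (A_eq g Lc alpha x y Hconv Hfam), (B_eq g Lc alpha x y Hconv Hfam).
  rewrite (XX_eq g Lc alpha a x f Hconv Halpha Hf), (YY_eq g Lc alpha a y f Hconv Halpha Hf).
  unfold Rsqr. fold (SS g x y t). pose proof (SS_pos g Lc alpha x y Hconv Hfam t).
  pose proof (si_pos alpha Halpha). unfold cot. field. lra.
Qed.
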